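(* Let $\mathtt{L}=\{x,(x,u'),u'\}$ be a line of $\mathbb{S}$, where $(x,u')\in\mathcal{P}$, and let $\alpha$ be a point of $\mathbb{S}$ not on $\mathtt{L}$. Then there is exactly one point of $\mathtt{L}$ nearest to $\alpha$ (in the collinearity graph of $\mathbb{S}$).
   Context: Let $S=(P,L)$ and $S'=(P',L')$ be generalized quadrangles of order $(2,2)$ (every line has 3 points, every point lies on 3 lines, and for each point $x$ and line $l\not\ni x$ exactly one point of $l$ is collinear with $x$), with an isomorphism $x\mapsto x'$ from $S$ to $S'$. In a point-line geometry, $x^{\perp}$ is $x$ together with all points collinear with $x$, and $A^{\perp}=\bigcap_{a\in A}a^{\perp}$. A triad is a set of three pairwise non-collinear points, complete if $|T^{\perp}|=3$. Let $\mathcal{P}=\{(x,y')\in P\times P':y'\in x'^{\perp}\}$ and $\mathcal{L}$ the set of all $3$-subsets $\{(x,u'),(y,v'),(z,w')\}$ of $\mathcal{P}$ where $T=\{x,y,z\}$ (three distinct points) is a line or complete triad of $S$ and $\{u',v',w'\}=T'^{\perp}$ in $S'$ with $u',v',w'$ distinct. The geometry $\mathbb{S}=(\mathbb{P},\mathbb{L})$ has point set $\mathbb{P}=\mathcal{P}\cup P\cup P'$ (disjoint union) and line set $\mathcal{L}\cup\{\{x,(x,u'),u'\}:(x,u')\in\mathcal{P}\}$. *)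

(* Defs.v *)
From mathcomp Require Import all_boot.
Set Implicit Arguments. Unset Strict Implicit. Unset Printing Implicit Defensive.

Section Geometry.
Variables (P : finType) (Ls : {set {set P}}).

Definition coll (x y : P) : bool :=
  (x != y) && [exists l in Ls, (x \in l) && (y \in l)].

Definition perp (x : P) : {set P} := [set y | (y == x) || coll x y].

Definition perpS (A : {set P}) : {set P} := [set y | [forall a in A, y \in perp a]].

Definition is_gq22 : Prop :=
  [/\ forall l, l \in Ls -> #|l| = 3,
      forall x, #|[set l in Ls | x \in l]| = 3 &
      forall x l, l \in Ls -> x \notin l -> #|[set y in l | coll x y]| = 1].

Definition is_triad (T : {set P}) : bool :=
  (#|T| == 3) && [forall a in T, forall b in T, ~~ coll a b].

Definition complete_triad (T : {set P}) : bool :=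
  is_triad T && (#|perpS T| == 3).
End Geometry.

Definition is_iso (P P' : finType) (Ls : {set {set P}}) (Ls' : {set {set P'}})
  (f : P -> P') : Prop :=
  bijective f /\ forall l : {set P}, (l \in Ls) = (f @: l \in Ls').

Section BigS.
Variables (P P' : finType) (Ls : {set {set P}}) (Ls' : {set {set P'}}) (f : P -> P').

Definition calP (x : P) (y : P') : bool := y \in perp Ls' (f x).

(* ambient type for the disjoint union calP ⊎ P ⊎ P' *)
Definition bigT : finType := ((P + P') + (P * P'))%type.

Definition embP (x : P) : bigT := inl (inl x).
Definition embP' (y : P') : bigT := inl (inr y).
Definition embPair (x : P) (y : P') : bigT := inr (x, y).

Definition isPt (z : bigT) : bool :=
  match z with inr (x, y) => calP x y | _ => true end.

Definition in_calL (Lc : {set bigT}) : Prop :=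
  exists (x y z : P) (u v w : P'),
    [/\ Lc = [set embPair x u; embPair y v; embPair z w],
        [&& calP x u, calP y v & calP z w],
        [&& x != y, y != z & x != z],
        [&& u != v, v != w & u != w] &
        ([set x; y; z] \in Ls \/ complete_triad Ls [set x; y; z]) /\
        [set u; v; w] = perpS Ls' (f @: [set x; y; z])].

Definition triv_line (x : P) (u : P') : {set bigT} :=
  [set embP x; embPair x u; embP' u].

Definition isLine (Lc : {set bigT}) : Prop :=
  in_calL Lc \/ exists x u, calP x u /\ Lc = triv_line x u.

Definition bcoll (a b : bigT) : Prop :=
  a <> b /\ exists Lc, isLine Lc /\ a \in Lc /\ b \in Lc.

Inductive walk : bigT -> bigT -> nat -> Prop :=
| walk0 a : walk a a 0
| walkS a b c n : bcoll a b -> walk b c n -> walk a c n.+1.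

Definition dist_le (a b : bigT) (n : nat) : Prop :=
  exists m, m <= n /\ walk a b m.

(* d(a,p) <= d(a,q) in N ∪ {oo} *)
Definition dist_leq (a p q : bigT) : Prop :=
  forall n, dist_le a q n -> dist_le a p n.
End BigS.

(* Main.v *)
Require Import Defs.
From mathcomp Require Import all_boot zify.
Set Implicit Arguments. Unset Strict Implicit. Unset Printing Implicit Defensive.

Lemma card3_third (T : finType) (A : {set T}) a b :
  #|A| = 3 -> exists2 c, c \in A & (c != a) && (c != b).
Proof.
move=> HA.
have: 0 < #|A :\ a :\ b|.
  have := cardsD1 a A; have := cardsD1 b (A :\ a).
  case: (b \in A :\ a); case: (a \in A) => /=; rewrite HA; lia.
case/card_gt0P => c; rewrite !inE => /and3P [cb ca cA].
by exists c => //; rewrite ca cb.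
Qed.

Lemma card3_all (T : finType) (A : {set T}) a b c d :
  #|A| = 3 -> a \in A -> b \in A -> c \in A -> a != b -> a != c -> b != c ->
  d \in A -> [|| d == a, d == b | d == c].
Proof.
move=> HA aA bA cA ab ac bc dA.
have sub : [set a; b; c] \subset A.
  by apply/subsetP => y; rewrite !inE => /orP [/orP [] | ] /eqP ->.
have card : #|[set a; b; c]| = 3.
  by rewrite -setUA cardsU1 cards2 !inE bc negb_or ab ac.
have /eqP E : [set a; b; c] == A by rewrite eqEcard sub HA card.
by move: dA; rewrite -E !inE -orbA.
Qed.

Section GQ.
Variables (P : finType) (Ls : {set {set P}}).
Hypothesis HS : is_gq22 Ls.
Local Notation coll := (coll Ls).
Local Notation perp := (perp Ls).

Lemma HL l : l \in Ls -> #|l| = 3. Proof. by case: HS => H _ _; apply: H. Qed.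
Lemma HP x : #|[set l in Ls | x \in l]| = 3. Proof. by case: HS => _ H _; apply: H. Qed.
Lemma HA x l : l \in Ls -> x \notin l -> #|[set y in l | coll x y]| = 1.
Proof. by case: HS => _ _ H; apply: H. Qed.

Lemma coll_line x y l : l \in Ls -> x \in l -> y \in l -> x != y -> coll x y.
Proof. by move=> lL xl yl xy; rewrite /Defs.coll xy; apply/existsP; exists l; rewrite lL xl yl. Qed.

Lemma coll_lineP x y : coll x y -> x != y /\ exists l, [/\ l \in Ls, x \in l & y \in l].
Proof. by case/andP=> xy /existsP [l /and3P [lL xl yl]]; split=> //; exists l. Qed.

Lemma coll_sym x y : coll x y = coll y x.
Proof.
apply/idP/idP => /coll_lineP [xy [l [lL xl yl]]]; apply: (coll_line lL) => //;
by rewrite eq_sym.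
Qed.

Lemma coll_irr x : coll x x = false.
Proof. by rewrite /Defs.coll eqxx. Qed.

Lemma perpE y x : (y \in perp x) = (y == x) || coll x y.
Proof. by rewrite inE. Qed.

Lemma perp_sym x y : (y \in perp x) = (x \in perp y).
Proof. by rewrite !perpE eq_sym coll_sym. Qed.

Lemma perp_refl x : x \in perp x.
Proof. by rewrite perpE eqxx. Qed.

Lemma line_perp l x y : l \in Ls -> x \in l -> y \in l -> y \in perp x.
Proof.
move=> lL xl yl; rewrite perpE; case: eqP => //= /eqP yx.
by apply: (coll_line lL) => //; rewrite eq_sym.
Qed.

Lemma proj_ex l y : l \in Ls -> y \notin l -> exists2 z, z \in l & coll y z.
Proof.
move=> lL yl; have /eqP/cards1P [z Ez] := HA lL yl.
have : z \in [set z0 in l | coll y z0] by rewrite Ez set11.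
by rewrite inE => /andP [zl cz]; exists z.
Qed.

Lemma proj_uniq l y z1 z2 : l \in Ls -> y \notin l -> z1 \in l -> z2 \in l ->
  coll y z1 -> coll y z2 -> z1 = z2.
Proof.
move=> lL yl z1l z2l c1 c2; have /eqP/cards1P [z Ez] := HA lL yl.
have : z1 \in [set z0 in l | coll y z0] by rewrite inE z1l c1.
have : z2 \in [set z0 in l | coll y z0] by rewrite inE z2l c2.
by rewrite Ez !inE => /eqP -> /eqP ->.
Qed.

Lemma proj_perp l y : l \in Ls -> exists2 z, z \in l & z \in perp y.
Proof.
move=> lL; case: (boolP (y \in l)) => yl; first by exists y => //; exact: perp_refl.
by case: (proj_ex lL yl) => z zl cz; exists z => //; rewrite perpE cz orbT.
Qed.

Lemma NT l a b y : l \in Ls -> a \in l -> b \in l -> a != b ->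
  y \in perp a -> y \in perp b -> y \in l.
Proof.
move=> lL al bl ab; rewrite !perpE => /orP [/eqP -> //|ca] /orP [/eqP -> //|cb].
case: (boolP (y \in l)) => // yl.
have c1 : coll y a by rewrite coll_sym.
have c2 : coll y b by rewrite coll_sym.
by rewrite (proj_uniq lL yl al bl c1 c2) eqxx in ab.
Qed.

Lemma two_lines l1 l2 a b : l1 \in Ls -> l2 \in Ls -> a \in l1 -> b \in l1 ->
  a \in l2 -> b \in l2 -> a != b -> l1 = l2.
Proof.
move=> l1L l2L a1 b1 a2 b2 ab.
have sub : l2 \subset l1.
  apply/subsetP => y y2; apply: (NT l1L a1 b1 ab); exact: line_perp y2.
by apply/eqP; rewrite eq_sym eqEcard sub (HL l1L) (HL l2L).
Qed.

Lemma lines_ex x : exists2 l, l \in Ls & x \in l.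
Proof.
have : 0 < #|[set l in Ls | x \in l]| by rewrite HP.
by case/card_gt0P => l; rewrite inE => /andP [] ; exists l.
Qed.

Lemma common_perp a b : exists w, w \in perp a /\ w \in perp b.
Proof.
case: (lines_ex a) => l lL al; case: (proj_perp b lL) => w wl wb.
by exists w; split=> //; exact: line_perp wl.
Qed.


Lemma perp_coll x y : y \in perp x -> y != x -> coll x y.
Proof. by rewrite perpE => + yx; rewrite (negbTE yx). Qed.

Lemma coll_perp x y : coll x y -> y \in perp x.
Proof. by rewrite perpE => ->; rewrite orbT. Qed.

Lemma notperp x y : x != y -> ~~ coll x y -> y \notin perp x.
Proof. by move=> xy nc; rewrite perpE negb_or eq_sym xy. Qed.

Lemma Lam_ne p q y : p != q -> ~~ coll p q -> y \in perp p -> y \in perp q ->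
  (y != p) /\ coll p y.
Proof.
move=> pq npq yp yq.
have yNp : y != p.
  by apply/eqP => E; move: yq; rewrite E; apply/negP; rewrite perp_sym notperp.
by split=> //; apply: perp_coll.
Qed.

Lemma noncoll_Lam p q y1 y2 : p != q -> ~~ coll p q ->
  y1 \in perp p -> y1 \in perp q -> y2 \in perp p -> y2 \in perp q ->
  y1 != y2 -> ~~ coll y1 y2.
Proof.
move=> pq npq y1p y1q y2p y2q y12; apply/negP => /coll_lineP [_ [l [lL y1l y2l]]].
have pl : p \in l by apply: (NT lL y1l y2l y12); rewrite perp_sym.
have ql : q \in l by apply: (NT lL y1l y2l y12); rewrite perp_sym.
by move: (line_perp lL pl ql); apply/negP; apply: notperp.
Qed.

Lemma line_Lam_uniq p q l y1 y2 : p != q -> ~~ coll p q -> l \in Ls -> p \in l ->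
  y1 \in l -> y2 \in l -> y1 \in perp q -> y2 \in perp q -> y1 = y2.
Proof.
move=> pq npq lL pl y1l y2l y1q y2q.
have ql : q \notin l.
  by apply/negP => ql; move: (line_perp lL pl ql); apply/negP; apply: notperp.
have y1Nq : y1 != q by apply/eqP => E; rewrite -E y1l in ql.
have y2Nq : y2 != q by apply/eqP => E; rewrite -E y2l in ql.
exact: (proj_uniq lL ql y1l y2l (perp_coll y1q y1Nq) (perp_coll y2q y2Nq)).
Qed.

Lemma line_thr p y : coll p y -> exists l, [/\ l \in Ls, p \in l & y \in l].
Proof. by case/coll_lineP. Qed.

Lemma inLp p l : l \in Ls -> p \in l -> l \in [set l0 in Ls | p \in l0].
Proof. by move=> lL pl; rewrite inE lL pl. Qed.

Lemma Lam_third p q a b : p != q -> ~~ coll p q ->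
  a \in perp p -> a \in perp q -> b \in perp p -> b \in perp q -> a != b ->
  exists c, [/\ c \in perp p, c \in perp q, c != a & c != b].
Proof.
move=> pq npq ap aq bp bq ab.
have [aNp cpa] := Lam_ne pq npq ap aq.
have [bNp cpb] := Lam_ne pq npq bp bq.
case: (line_thr cpa) => la [laL pla ala].
case: (line_thr cpb) => lb [lbL plb blb].
have lab : la != lb.
  apply/eqP => E; rewrite -E in blb.
  by move: ab; rewrite (line_Lam_uniq pq npq laL pla ala blb aq bq) eqxx.
case: (card3_third la lb (HP p)) => lc; rewrite inE => /andP [lcL plc] /andP [lca lcb].
case: (proj_perp q lcL) => c clc cq.
exists c; split => //.
- exact: line_perp lcL plc clc.
- apply/eqP => E; rewrite E in clc.
  by move: lca; rewrite (two_lines lcL laL plc clc pla ala) ?eqxx // eq_sym.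
- apply/eqP => E; rewrite E in clc.
  by move: lcb; rewrite (two_lines lcL lbL plc clc plb blb) ?eqxx // eq_sym.
Qed.

Lemma Lam_three p q a b c y : p != q -> ~~ coll p q ->
  a \in perp p -> a \in perp q -> b \in perp p -> b \in perp q ->
  c \in perp p -> c \in perp q -> y \in perp p -> y \in perp q ->
  a != b -> a != c -> b != c -> [|| y == a, y == b | y == c].
Proof.
move=> pq npq ap aq bp bq cp cq yp yq ab ac bc.
have [aNp cpa] := Lam_ne pq npq ap aq.
have [bNp cpb] := Lam_ne pq npq bp bq.
have [cNp cpc] := Lam_ne pq npq cp cq.
have [yNp cpy] := Lam_ne pq npq yp yq.
case: (line_thr cpa) => la [laL pla ala].
case: (line_thr cpb) => lb [lbL plb blb].
case: (line_thr cpc) => lc [lcL plc clc].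
case: (line_thr cpy) => ly [lyL ply yly].
have ne : forall l1 l2 z1 z2, l1 \in Ls -> l2 \in Ls -> p \in l1 -> p \in l2 ->
    z1 \in l1 -> z2 \in l2 -> z1 \in perp q -> z2 \in perp q -> z1 != z2 -> l1 != l2.
  move=> l1 l2 z1 z2 l1L l2L p1 p2 z1l z2l z1q z2q z12; apply/eqP => E.
  by rewrite -E in z2l; move: z12; rewrite (line_Lam_uniq pq npq l1L p1 z1l z2l z1q z2q) eqxx.
have := card3_all (HP p) (inLp laL pla) (inLp lbL plb) (inLp lcL plc)
  (ne _ _ _ _ laL lbL pla plb ala blb aq bq ab)
  (ne _ _ _ _ laL lcL pla plc ala clc aq cq ac)
  (ne _ _ _ _ lbL lcL plb plc blb clc bq cq bc) (inLp lyL ply).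
case/or3P => /eqP E; rewrite E in yly.
- by rewrite (line_Lam_uniq pq npq laL pla yly ala yq aq) eqxx.
- by rewrite (line_Lam_uniq pq npq lbL plb yly blb yq bq) eqxx orbT.
- by rewrite (line_Lam_uniq pq npq lcL plc yly clc yq cq) eqxx !orbT.
Qed.

Lemma regR a b p q r c : a != b -> ~~ coll a b ->
  p \in perp a -> p \in perp b -> q \in perp a -> q \in perp b ->
  r \in perp a -> r \in perp b -> p != q -> p != r -> q != r ->
  c \in perp p -> c \in perp q -> c != a -> c != b -> c \in perp r.
Proof.
move=> ab nab pa pb qa qb ra rb pq pr qr cp cq ca cb.
apply/negPn/negP => cr.
have npq := noncoll_Lam ab nab pa pb qa qb pq.
have npr := noncoll_Lam ab nab pa pb ra rb pr.
have nqr := noncoll_Lam ab nab qa qb ra rb qr.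
have ap : a \in perp p by rewrite perp_sym.
have aq : a \in perp q by rewrite perp_sym.
have bp : b \in perp p by rewrite perp_sym.
have bq : b \in perp q by rewrite perp_sym.
have pc : p \in perp c by rewrite perp_sym.
have qc : q \in perp c by rewrite perp_sym.
have nca := noncoll_Lam pq npq cp cq ap aq ca.
have ncb := noncoll_Lam pq npq cp cq bp bq cb.
have [_ car] := Lam_ne ab nab ra rb.
have ba : b != a by rewrite eq_sym.
have nba : ~~ coll b a by rewrite coll_sym.
have [_ cbr] := Lam_ne ba nba rb ra.
case: (line_thr car) => l1 [l1L al1 rl1].
case: (line_thr cbr) => l2 [l2L bl2 rl2].
have ncr : ~~ coll r c by apply/negP => /coll_perp H; rewrite H in cr.
have cl1 : c \notin l1 by apply/negP => cl; move/negP: cr; apply; exact: line_perp l1L rl1 cl.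
have cl2 : c \notin l2 by apply/negP => cl; move/negP: cr; apply; exact: line_perp l2L rl2 cl.
case: (proj_ex l1L cl1) => a1 a1l cca1.
case: (proj_ex l2L cl2) => b1 b1l ccb1.
have a1a : a1 != a by apply/eqP => E; rewrite E in cca1; rewrite cca1 in nca.
have b1b : b1 != b by apply/eqP => E; rewrite E in ccb1; rewrite ccb1 in ncb.
have a1r : a1 != r by apply/eqP => E; rewrite E coll_sym in cca1; rewrite cca1 in ncr.
have b1r : b1 != r by apply/eqP => E; rewrite E coll_sym in ccb1; rewrite ccb1 in ncr.
have cNp : c != p by apply/eqP => E; move: cq; rewrite E perp_sym; apply/negP; apply: notperp.
have cNq : c != q.
  by apply/eqP => E; move: cp; rewrite E; apply/negP; apply: notperp.
case: (line_thr (perp_coll cp cNp)) => mp [mpL pmp cmp].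
case: (line_thr (perp_coll cq cNq)) => mq [mqL qmq cmq].
case: (line_thr cca1) => ka [kaL cka a1ka].
case: (line_thr ccb1) => kb [kbL ckb b1kb].
have key : forall s t (l : {set P}) t1, s \in perp t -> t \in l -> t1 \in l -> t != t1 -> r \in l ->
    l \in Ls -> s != r -> ~~ coll s r -> s \notin perp t1.
  move=> s t l t1 st tl t1l tt1 rl lL sr nsr; apply/negP => st1.
  have sl := NT lL tl t1l tt1 st st1.
  by move: (line_perp lL rl sl); apply/negP; apply: notperp; rewrite 1?eq_sym // coll_sym.
have kaNmp : ka != mp.
  apply/eqP => E; rewrite E in a1ka.
  by move: (line_perp mpL a1ka pmp); apply/negP; apply: (key p a l1) => //; rewrite eq_sym.
have kaNmq : ka != mq.
  apply/eqP => E; rewrite E in a1ka.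
  by move: (line_perp mqL a1ka qmq); apply/negP; apply: (key q a l1) => //; rewrite eq_sym.
have kbNmp : kb != mp.
  apply/eqP => E; rewrite E in b1kb.
  by move: (line_perp mpL b1kb pmp); apply/negP; apply: (key p b l2) => //; rewrite eq_sym.
have kbNmq : kb != mq.
  apply/eqP => E; rewrite E in b1kb.
  by move: (line_perp mqL b1kb qmq); apply/negP; apply: (key q b l2) => //; rewrite eq_sym.
have mpq : mp != mq.
  apply/eqP => E; rewrite E in pmp.
  by move: (line_perp mqL pmp qmq); apply/negP; apply: notperp.
have mpka : mp != ka by rewrite eq_sym.
have mqka : mq != ka by rewrite eq_sym.
have := card3_all (HP c) (inLp mpL cmp) (inLp mqL cmq) (inLp kaL cka) mpq
  mpka mqka (inLp kbL ckb).
rewrite (negbTE kbNmp) (negbTE kbNmq) /= => /eqP E; rewrite E in b1kb.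
have l12 : forall z, z \in l1 -> z \in l2 -> z != r -> False.
  move=> z zl1 zl2 zr.
  have rz : r != z by rewrite eq_sym.
  have E12 := two_lines l1L l2L rl1 zl1 rl2 zl2 rz.
  rewrite -E12 in bl2.
  by move: (line_perp l1L al1 bl2); apply/negP; apply: notperp.
have a1b1 : a1 != b1 by apply/eqP => E'; rewrite -E' in b1l; exact: (l12 a1).
have b1a1 : b1 \in perp a1 := line_perp kaL a1ka b1kb.
have b1r' : b1 \in perp r := line_perp l2L rl2 b1l.
have ra1 : r != a1 by rewrite eq_sym.
have := NT l1L rl1 a1l ra1 b1r' b1a1.
by move=> b1l1; exact: (l12 b1).
Qed.

Lemma lemG v w a b x u : v != w ->
  a \in perp v -> a \in perp w -> b \in perp v -> b \in perp w ->
  x \in perp v -> x \in perp w -> a != b -> a != x -> b != x ->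
  u \in perp b -> u \in perp x -> u \in perp a.
Proof.
move=> vw av aw bv bw xv xw ab ax bx ub ux.
case: (boolP (coll v w)) => [cvw|ncvw].
  case: (line_thr cvw) => l [lL vl wl].
  have al := NT lL vl wl vw av aw.
  have bl := NT lL vl wl vw bv bw.
  have xl := NT lL vl wl vw xv xw.
  have ul := NT lL bl xl bx ub ux.
  exact: line_perp lL al ul.
have nbx := noncoll_Lam vw ncvw bv bw xv xw bx.
have vb : v \in perp b by rewrite perp_sym.
have vx : v \in perp x by rewrite perp_sym.
have wb : w \in perp b by rewrite perp_sym.
have wx : w \in perp x by rewrite perp_sym.
case: (eqVneq u v) => [->|uv]; first by rewrite perp_sym.
case: (eqVneq u w) => [->|uw]; first by rewrite perp_sym.
rewrite perp_sym; apply: (regR bx nbx vb vx wb wx ub ux) => //; by rewrite eq_sym.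
Qed.

End GQ.


Lemma card_set3 (T : finType) (a b c : T) : a != b -> a != c -> b != c -> #|[set a; b; c]| = 3.
Proof. by move=> ab ac bc; rewrite -setUA cardsU1 cards2 !inE bc negb_or ab ac. Qed.

Lemma set3_eq (T : finType) (A : {set T}) a b c : #|A| = 3 -> a \in A -> b \in A -> c \in A ->
  a != b -> a != c -> b != c -> [set a; b; c] = A.
Proof.
move=> HA aA bA cA ab ac bc.
have sub : [set a; b; c] \subset A.
  by apply/subsetP => y; rewrite !inE => /orP [/orP [] | ] /eqP ->.
by apply/eqP; rewrite eqEcard sub HA card_set3.
Qed.

Lemma in_set3 (T : finType) (a b c y : T) : (y \in [set a; b; c]) = [|| y == a, y == b | y == c].
Proof. by rewrite !inE orbA. Qed.

Lemma perpS3 (P : finType) (Ls : {set {set P}}) a b c y :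
  (y \in perpS Ls [set a; b; c]) = [&& y \in perp Ls a, y \in perp Ls b & y \in perp Ls c].
Proof.
rewrite inE; apply/forall_inP/and3P.
  by move=> H; split; apply: H; rewrite in_set3 eqxx ?orbT.
by case=> ha hb hc t; rewrite in_set3 => /or3P [] /eqP ->.
Qed.

Lemma perpS_line (P : finType) (Ls : {set {set P}}) (HS : is_gq22 Ls) l a b :
  l \in Ls -> a \in l -> b \in l -> a != b -> perpS Ls l = l.
Proof.
move=> lL al bl ab; apply/setP => y; rewrite inE; apply/forall_inP/idP.
  by move=> H; apply: (NT HS lL al bl ab); apply: H.
by move=> yl t tl; apply: (line_perp lL tl yl).
Qed.

Section Transport.
Variables (P P' : finType) (Ls : {set {set P}}) (Ls' : {set {set P'}}) (f : P -> P').
Hypothesis Hf : is_iso Ls Ls' f.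

Lemma f_inj : injective f.
Proof. by case: Hf => /bij_inj. Qed.

Lemma coll_f a b : coll Ls' (f a) (f b) = coll Ls a b.
Proof.
case: Hf => [[g fg gf] Hl].
rewrite /Defs.coll (inj_eq f_inj); congr andb.
apply/existsP/existsP => [[l' /and3P [l'L fa fb]]|[l /and3P [lL al bl]]].
  have E : f @: (g @: l') = l'.
    by rewrite -imset_comp (eq_imset _ gf) imset_id.
  exists (g @: l'); rewrite Hl E l'L /=.
  by rewrite -{1}(fg a) -{1}(fg b) !imset_f.
by exists (f @: l); rewrite -Hl lL !imset_f.
Qed.

Lemma perp_f a y : (f y \in perp Ls' (f a)) = (y \in perp Ls a).
Proof. by rewrite !inE (inj_eq f_inj) coll_f. Qed.

Lemma perpS_f (T : {set P}) : perpS Ls' (f @: T) = f @: perpS Ls T.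
Proof.
case: Hf => [[g fg gf] _].
apply/setP => y'; rewrite -(gf y') (mem_imset _ _ f_inj) !inE.
apply/forall_inP/forall_inP.
  by move=> H a aT; rewrite -perp_f; apply: H; apply: imset_f.
by move=> H a' /imsetP [a aT ->]; rewrite perp_f; apply: H.
Qed.

Lemma complete_f (T : {set P}) : complete_triad Ls' (f @: T) = complete_triad Ls T.
Proof.
rewrite /complete_triad /is_triad perpS_f !(card_imset _ f_inj); congr (_ && _ && _).
apply/forall_inP/forall_inP.
  move=> H a aT; apply/forall_inP => b bT; rewrite -coll_f.
  by move/forall_inP: (H _ (imset_f f aT)); apply; apply: imset_f.
move=> H a' /imsetP [a aT ->]; apply/forall_inP => b' /imsetP [b bT ->].
by rewrite coll_f; move/forall_inP: (H a aT); apply.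
Qed.

End Transport.


Section BigS.
Variables (P P' : finType) (Ls : {set {set P}}) (Ls' : {set {set P'}}) (f : P -> P').
Hypotheses (HS : is_gq22 Ls) (HS' : is_gq22 Ls') (Hf : is_iso Ls Ls' f).
Local Notation T := (bigT P P').
Local Notation bcoll := (bcoll Ls Ls' f).
Local Notation cP := (calP Ls' f).
Local Notation perp' := (perp Ls').

Lemma ePP a b : (embP P' a == embP P' b :> T) = (a == b).
Proof. by apply/eqP/eqP => [[]|->]. Qed.
Lemma eP'P' a b : (embP' P a == embP' P b :> T) = (a == b).
Proof. by apply/eqP/eqP => [[]|->]. Qed.
Lemma ePairPair a v b w : (embPair a v == embPair b w :> T) = (a == b) && (v == w).
Proof. by apply/eqP/andP => [[-> ->]|[/eqP -> /eqP ->]]. Qed.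
Lemma ePP' a v : (embP P' a == embP' P v :> T) = false. Proof. by []. Qed.
Lemma eP'P a v : (embP' P v == embP P' a :> T) = false. Proof. by []. Qed.
Lemma ePPair a b w : (embP P' a == embPair b w :> T) = false. Proof. by []. Qed.
Lemma ePairP a b w : (embPair b w == embP P' a :> T) = false. Proof. by []. Qed.
Lemma eP'Pair v b w : (embP' P v == embPair b w :> T) = false. Proof. by []. Qed.
Lemma ePairP' v b w : (embPair b w == embP' P v :> T) = false. Proof. by []. Qed.

Definition eqT := (ePP, eP'P', ePairPair, ePP', eP'P, ePPair, ePairP, eP'Pair, ePairP').

Lemma trivE x u z : (z \in triv_line x u) =
  [|| z == embP P' x, z == embPair x u | z == embP' P u].
Proof. by rewrite in_set3. Qed.

Lemma calL_N Lc a v b w : in_calL Ls Ls' f Lc -> embPair a v \in Lc ->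
  embPair b w \in Lc ->
  [/\ v \in perp' (f b), w \in perp' (f b) &
      (embPair a v != embPair b w :> T -> a != b /\ v != w)].
Proof.
case=> [x [y [z [u [v' [w' [-> _ dxy duv [_ E]]]]]]]].
have HP : forall s t, s \in [set u; v'; w'] -> t \in [set x; y; z] -> s \in perp' (f t).
  move=> s t; rewrite E inE => /forall_inP H tT; apply: H; exact: imset_f.
case/and3P: dxy => xy yz xz; case/and3P: duv => uv vw uw.
rewrite !in_set3 !eqT.
case/or3P => /andP [/eqP -> /eqP ->]; case/or3P => /andP [/eqP -> /eqP ->];
  (split; [apply: HP; by rewrite in_set3 eqxx ?orbT |
           apply: HP; by rewrite in_set3 eqxx ?orbT |
           rewrite ?eqxx /= => H; split; by [|rewrite eq_sym]]).
Qed.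

Lemma calL_pair Lc z : in_calL Ls Ls' f Lc -> z \in Lc -> exists b w, z = embPair b w.
Proof.
case=> [x [y [z0 [u [v' [w' [-> _ _ _ _]]]]]]].
by rewrite in_set3 => /or3P [] /eqP ->; eexists; eexists.
Qed.

Lemma bcoll_sym a b : bcoll a b -> bcoll b a.
Proof. by case=> ab [Lc [HL [aL bL]]]; split; [move=> E; apply: ab | exists Lc]. Qed.

Lemma bP_inv a z : bcoll (embP P' a) z ->
  exists v, cP a v /\ (z = embPair a v \/ z = embP' P v).
Proof.
case=> ne [Lc [[HL|[x [u [Hxu ->]]]] [aL zL]]].
  by case: (calL_pair HL aL) => b [w].
move: aL; rewrite trivE !eqT !orbF => /eqP ax; subst x.
exists u; split => //; move: zL; rewrite trivE => /or3P [/eqP E|/eqP ->|/eqP ->]; by [congruence|left|right].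
Qed.

Lemma bP'_inv v z : bcoll (embP' P v) z ->
  exists b, cP b v /\ (z = embPair b v \/ z = embP P' b).
Proof.
case=> ne [Lc [[HL|[x [u [Hxu ->]]]] [aL zL]]].
  by case: (calL_pair HL aL) => b [w].
move: aL; rewrite trivE !eqT /= => /eqP ax; subst u.
exists x; split => //; move: zL; rewrite trivE => /or3P [/eqP ->|/eqP ->|/eqP E]; by [congruence|left|right].
Qed.

Lemma bPair_inv a v z : bcoll (embPair a v) z ->
  z = embP P' a \/ z = embP' P v \/ exists b w, z = embPair b w /\
    [/\ cP b w, a != b, v != w, v \in perp' (f b) & w \in perp' (f a)].
Proof.
case=> ne [Lc [[HL|[x [u [Hxu ->]]]] [aL zL]]].
  case: (calL_pair HL zL) => b [w Ez]; subst z.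
  case: (calL_N HL aL zL) => vb wb /(_ (introN eqP ne)) [ab vw].
  case: (calL_N HL zL aL) => wa _ _.
  by right; right; exists b, w.
move: aL; rewrite trivE !eqT !orbF => /andP [/eqP ax /eqP vu]; subst x u.
move: zL; rewrite trivE => /or3P [/eqP ->|/eqP E|/eqP ->]; by [congruence|left|right;left].
Qed.

Lemma bc_triv x u p q : cP x u -> p \in triv_line x u -> q \in triv_line x u -> p <> q ->
  bcoll p q.
Proof. by move=> Hxu pL qL pq; split => //; exists (triv_line x u); split => //; right; exists x, u. Qed.

Lemma bc_P_Pair a v : cP a v -> bcoll (embP P' a) (embPair a v).
Proof. by move=> H; apply: (bc_triv H); rewrite ?trivE ?eqxx ?orbT. Qed.
Lemma bc_P_P' a v : cP a v -> bcoll (embP P' a) (embP' P v).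
Proof. by move=> H; apply: (bc_triv H); rewrite ?trivE ?eqxx ?orbT. Qed.
Lemma bc_Pair_P' a v : cP a v -> bcoll (embPair a v) (embP' P v).
Proof. by move=> H; apply: (bc_triv H); rewrite ?trivE ?eqxx ?orbT. Qed.

Lemma PS a b v w : a != b -> v != w -> v \in perp' (f a) -> v \in perp' (f b) ->
  w \in perp' (f a) -> w \in perp' (f b) -> bcoll (embPair a v) (embPair b w).
Proof.
move=> ab vw va vb wa wb.
have [[g fg gf] Hl] := Hf.
have fab : f a != f b by rewrite (inj_eq (f_inj Hf)).
have imE : forall c, f @: [set a; b; c] = [set f a; f b; f c].
  by move=> c; rewrite !imsetU !imset_set1.
suff [c [z [ca cb zv zw [zc H]]]] : exists c z, [/\ c != a, c != b, z != v, z != w &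
   z \in perp' (f c) /\ (([set a; b; c] \in Ls \/ complete_triad Ls [set a; b; c]) /\
   [set v; w; z] = perpS Ls' (f @: [set a; b; c]))].
  split; first by case => /eqP; rewrite (negbTE ab).
  exists [set embPair a v; embPair b w; embPair c z]; split; last by rewrite !in_set3 !eqxx ?orbT.
  left; exists a, b, c, v, w, z; split => //.
  - by rewrite /calP va wb zc.
  - by rewrite ab eq_sym cb eq_sym ca.
  - by rewrite vw eq_sym zw eq_sym zv.
case: (boolP (coll Ls' (f a) (f b))) => [cab|ncab].
  case: (line_thr cab) => l [lL al bl].
  case: (card3_third (f a) (f b) (HL HS' lL)) => c' c'l /andP [c'a c'b].
  have vl := NT HS' lL al bl fab va vb.
  have wl := NT HS' lL al bl fab wa wb.
  case: (card3_third v w (HL HS' lL)) => z zl /andP [zv zw].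
  have fc : f (g c') = c' by rewrite gf.
  have El : [set f a; f b; c'] = l.
    by apply: set3_eq (HL HS' lL) al bl c'l fab _ _; rewrite eq_sym.
  exists (g c'), z; split => //.
  - by apply/eqP => E; move: c'a; rewrite -fc E eqxx.
  - by apply/eqP => E; move: c'b; rewrite -fc E eqxx.
  split; first by rewrite fc; exact: line_perp lL c'l zl.
  split; first by left; rewrite Hl imE fc El.
  rewrite imE fc El (perpS_line HS' lL al bl fab).
  by apply: set3_eq (HL HS' lL) vl wl zl vw _ _; rewrite eq_sym.
have [z [za zb zv zw]] := Lam_third HS' fab ncab va vb wa wb vw.
have ncvw := noncoll_Lam HS' fab ncab va vb wa wb vw.
have av : f a \in perp' v by rewrite perp_sym.
have aw : f a \in perp' w by rewrite perp_sym.
have bv : f b \in perp' v by rewrite perp_sym.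
have bw : f b \in perp' w by rewrite perp_sym.
have [c' [c'v c'w c'a c'b]] := Lam_third HS' vw ncvw av aw bv bw fab.
have vz : v != z by rewrite eq_sym.
have wz : w != z by rewrite eq_sym.
have c'z := regR HS' fab ncab va vb wa wb za zb vw vz wz c'v c'w c'a c'b.
have fc : f (g c') = c' by rewrite gf.
have perpE : perpS Ls' [set f a; f b; c'] = [set v; w; z].
  apply/setP => y; rewrite perpS3 in_set3; apply/and3P/or3P.
    case=> ya yb yc; apply/or3P.
    exact: (Lam_three HS' fab ncab va vb wa wb za zb ya yb vw vz wz).
  by case=> /eqP ->; split; rewrite // perp_sym.
have ac' : f a != c' by rewrite eq_sym.
have bc' : f b != c' by rewrite eq_sym.
have nac := noncoll_Lam HS' vw ncvw av aw c'v c'w ac'.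
have nbc := noncoll_Lam HS' vw ncvw bv bw c'v c'w bc'.
exists (g c'), z; split => //.
- by apply/eqP => E; move: c'a; rewrite -fc E eqxx.
- by apply/eqP => E; move: c'b; rewrite -fc E eqxx.
split; first by rewrite fc perp_sym.
rewrite imE fc perpE; split => //; right.
rewrite -(complete_f Hf) imE fc /complete_triad /is_triad perpE !card_set3 //= andbT.
apply/forall_inP => s; rewrite in_set3 => /or3P [] /eqP ->;
  apply/forall_inP => t; rewrite in_set3 => /or3P [] /eqP ->;
  by rewrite ?coll_irr // coll_sym.
Qed.

Local Notation walk := (walk Ls Ls' f).

Lemma walk_inv a c m : walk a c m -> m <= 2 ->
  a = c \/ (bcoll a c /\ m = 1) \/ (exists b, bcoll a b /\ bcoll b c) /\ m = 2.
Proof.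
case=> [a0|a0 b c0 n Hab Hbc]; first by left.
case: Hbc Hab => [b0 Hab _|b0 b1 c1 n1 Hb Hbc1 Hab]; first by right; left.
case: Hbc1 Hb => [b2 Hb _|]; first by right; right; split => //; exists b0.
by move=> *; lia.
Qed.

Lemma concl x u alpha p k : alpha \notin triv_line x u -> p \in triv_line x u ->
  walk alpha p k ->
  (forall q, q \in triv_line x u -> q <> p -> forall m, m <= k -> ~ walk alpha q m) ->
  exists! p : T, p \in triv_line x u /\
    forall q, q \in triv_line x u -> dist_leq Ls Ls' f alpha p q.
Proof.
move=> Hn pL wp H; exists p; split.
  split => // q qL n [m [mn wq]].
  case: (eqVneq q p) => [E|qp]; first by subst q; exists m.
  exists k; split => //.
  case: (leqP m k) => [mk|km]; first by case: (H q qL (elimN eqP qp) m mk).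
  lia.
move=> p2 [p2L Hp2].
case: (eqVneq p p2) => [//|pp2].
case: (Hp2 p pL k) => [|m [mk wm]]; first by exists k.
case: (H p2 p2L _ m mk wm) => E; by rewrite E eqxx in pp2.
Qed.

Lemma concl1 x u alpha p : alpha \notin triv_line x u -> p \in triv_line x u ->
  bcoll alpha p ->
  (forall q, q \in triv_line x u -> q <> p -> ~ bcoll alpha q) ->
  exists! p : T, p \in triv_line x u /\
    forall q, q \in triv_line x u -> dist_leq Ls Ls' f alpha p q.
Proof.
move=> Hn pL bp H; apply: (concl (k := 1) Hn pL).
  by apply: walkS bp (walk0 _ _ _ _).
move=> q qL qp m m1 wq; case: (walk_inv wq (leqW m1)) => [E|[[bq _]|[_ E]]].
- by subst q; rewrite qL in Hn.
- exact: (H q qL qp).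
- by subst m.
Qed.

Lemma concl2 x u alpha p b : alpha \notin triv_line x u -> p \in triv_line x u ->
  bcoll alpha b -> bcoll b p ->
  (forall q, q \in triv_line x u -> q <> p ->
     ~ bcoll alpha q /\ ~ (exists b, bcoll alpha b /\ bcoll b q)) ->
  exists! p : T, p \in triv_line x u /\
    forall q, q \in triv_line x u -> dist_leq Ls Ls' f alpha p q.
Proof.
move=> Hn pL b1 b2 H; apply: (concl (k := 2) Hn pL).
  by apply: walkS b1 (walkS b2 (walk0 _ _ _ _)).
move=> q qL qp m m2 wq; case: (H q qL qp) => H1 H2.
case: (walk_inv wq m2) => [E|[[bq _]|[ex _]]] //.
by subst q; rewrite qL in Hn.
Qed.

End BigS.


Section Main.
Variables (P P' : finType) (Ls : {set {set P}}) (Ls' : {set {set P'}}) (f : P -> P').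
Hypotheses (HS : is_gq22 Ls) (HS' : is_gq22 Ls') (Hf : is_iso Ls Ls' f).
Local Notation T := (bigT P P').
Local Notation bcoll := (bcoll Ls Ls' f).
Local Notation cP := (calP Ls' f).
Local Notation perp' := (perp Ls').

Lemma farX_pair a v x : a != x -> ~~ cP x v ->
  ~ bcoll (embPair a v) (embP P' x) /\
  ~ (exists b, bcoll (embPair a v) b /\ bcoll b (embP P' x)).
Proof.
move=> ax xv; split.
  case/bPair_inv => [/eqP|[/eqP|[b [w [/eqP]]]]]; rewrite ?eqT //.
  by rewrite eq_sym (negbTE ax).
case=> b0 [/bPair_inv H1 H2]; case: H1 => [E|[E|[b [w [E [bw ab vw vb wa]]]]]]; subst b0.
- by case/bP_inv: H2 => w [_ [/eqP|/eqP]]; rewrite eqT.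
- case/bP'_inv: H2 => b [bv [/eqP|/eqP]]; rewrite eqT // => /eqP E; subst b.
  by rewrite bv in xv.
- case/bPair_inv: H2 => [/eqP|[/eqP|[b2 [w2 [/eqP]]]]]; rewrite ?eqT //.
  move/eqP => E; subst b.
  by rewrite /calP vb in xv.
Qed.

Lemma farU_pair a v u : v != u -> ~~ cP a u ->
  ~ bcoll (embPair a v) (embP' P u) /\
  ~ (exists b, bcoll (embPair a v) b /\ bcoll b (embP' P u)).
Proof.
move=> vu au; split.
  case/bPair_inv => [/eqP|[/eqP|[b [w [/eqP]]]]]; rewrite ?eqT //.
  by rewrite eq_sym (negbTE vu).
case=> b0 [/bPair_inv H1 H2]; case: H1 => [E|[E|[b [w [E [bw ab vw vb wa]]]]]]; subst b0.
- case/bP_inv: H2 => w [aw [/eqP|/eqP]]; rewrite eqT // => /eqP E; subst w.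
  by rewrite aw in au.
- by case/bP'_inv: H2 => b [_ [/eqP|/eqP]]; rewrite eqT.
- case/bPair_inv: H2 => [/eqP|[/eqP|[b2 [w2 [/eqP]]]]]; rewrite ?eqT //.
  move/eqP => E; subst w.
  by rewrite /calP wa in au.
Qed.

Lemma main x u (Hxu : cP x u) (alpha : T) :
  isPt Ls' f alpha -> alpha \notin triv_line x u ->
  exists! p : T, p \in triv_line x u /\
    forall q, q \in triv_line x u -> dist_leq Ls Ls' f alpha p q.
Proof.
have [[g fg gf] Hl] := Hf.
have finj := f_inj Hf.
have Xin : embP P' x \in triv_line x u by rewrite trivE eqxx.
have Min : embPair x u \in triv_line x u by rewrite trivE eqxx orbT.
have Uin : embP' P u \in triv_line x u by rewrite trivE eqxx !orbT.
case: alpha => [[a|v]|[a v]] Hpt Hn.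
- have ax : a != x by apply: contra Hn => /eqP ->.
  case: (boolP (cP a u)) => au.
    apply: (concl1 Hn Uin (bc_P_P' Ls au)).
    move=> q; rewrite trivE => /or3P [] /eqP -> qp //.
      by case/bP_inv => w [_ [/eqP|/eqP]]; rewrite eqT.
    case/bP_inv => w [_ [/eqP|/eqP]]; rewrite eqT // => /andP [/eqP E _].
    by rewrite E eqxx in ax.
  have [w [wa wx]] := common_perp HS' (f a) (f x).
  apply: (concl2 Hn Xin (bc_P_P' Ls (wa : cP a w)) (bcoll_sym (bc_P_P' Ls (wx : cP x w)))).
  move=> q; rewrite trivE => /or3P [] /eqP -> qp //; split.
  + case/bP_inv => w' [_ [/eqP|/eqP]]; rewrite eqT // => /andP [/eqP E _].
    by rewrite E eqxx in ax.
  + case=> b [/bP_inv [v [av [E|E]]] H]; subst b.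
      case/bPair_inv: H => [/eqP|[/eqP|[b2 [w2 [/eqP]]]]]; rewrite ?eqT //.
      by case/andP => /eqP E1 /eqP E2; subst; case => _ _ _ _ H; rewrite /calP H in au.
    case/bP'_inv: H => b [bv [/eqP|/eqP]]; rewrite ?eqT //.
    by case/andP => /eqP E1 /eqP E2; subst; rewrite av in au.
  + case/bP_inv => w' [aw' [/eqP|/eqP]]; rewrite eqT // => /eqP E; subst w'.
    by rewrite aw' in au.
  + case=> b [/bP_inv [v [av [E|E]]] H]; subst b.
      case/bPair_inv: H => [/eqP|[/eqP|[b2 [w2 [/eqP]]]]]; rewrite ?eqT //.
      by move=> /eqP E; subst v; rewrite av in au.
    by case/bP'_inv: H => b [bv [/eqP|/eqP]]; rewrite ?eqT.
- have vu : v != u by apply: contra Hn => /eqP ->; rewrite trivE eqxx !orbT.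
  case: (boolP (cP x v)) => xv.
    apply: (concl1 Hn Xin (bcoll_sym (bc_P_P' Ls xv))).
    move=> q; rewrite trivE => /or3P [] /eqP -> qp //.
      case/bP'_inv => b [_ [/eqP|/eqP]]; rewrite eqT // => /andP [_ /eqP E].
      by rewrite E eqxx in vu.
    by case/bP'_inv => b [_ [/eqP|/eqP]]; rewrite eqT.
  have [c' [c'v c'u]] := common_perp HS' v u.
  have bv : cP (g c') v by rewrite /calP gf perp_sym.
  have bu : cP (g c') u by rewrite /calP gf perp_sym.
  apply: (concl2 Hn Uin (bcoll_sym (bc_P_P' Ls bv)) (bc_P_P' Ls bu)).
  move=> q; rewrite trivE => /or3P [] /eqP -> qp //; split.
  + case/bP'_inv => b [b'v [/eqP|/eqP]]; rewrite eqT // => /eqP E; subst b.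
    by rewrite b'v in xv.
  + case=> b0 [/bP'_inv [b [b'v [E|E]]] H]; subst b0.
      case/bPair_inv: H => [/eqP|[/eqP|[b2 [w2 [/eqP]]]]]; rewrite ?eqT //.
      by move=> /eqP E; subst b; rewrite b'v in xv.
    by case/bP_inv: H => w [_ [/eqP|/eqP]]; rewrite eqT.
  + case/bP'_inv => b [_ [/eqP|/eqP]]; rewrite eqT // => /andP [_ /eqP E].
    by rewrite E eqxx in vu.
  + case=> b0 [/bP'_inv [b [b'v [E|E]]] H]; subst b0.
      case/bPair_inv: H => [/eqP|[/eqP|[b2 [w2 [/eqP]]]]]; rewrite ?eqT //.
      by case/andP => /eqP E1 /eqP E2; subst; case => _ _ _ H _; rewrite /calP H in xv.
    case/bP_inv: H => w [_ [/eqP|/eqP]]; rewrite eqT // => /andP [/eqP E _]; subst b.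
    by rewrite b'v in xv.
- have av : cP a v := Hpt.
  case: (eqVneq a x) => [E|ax].
    subst a.
    have vu : v != u by apply: contra Hn => /eqP ->; rewrite trivE eqxx orbT.
    apply: (concl1 Hn Xin (bcoll_sym (bc_P_Pair Ls av))).
    move=> q; rewrite trivE => /or3P [] /eqP -> qp //.
      case/bPair_inv => [/eqP|[/eqP|[b2 [w2 [/eqP]]]]]; rewrite ?eqT //.
      by case/andP => /eqP E1 /eqP E2; subst; case => _; rewrite eqxx.
    case/bPair_inv => [/eqP|[/eqP|[b2 [w2 [/eqP]]]]]; rewrite ?eqT //.
    by move=> /eqP E; rewrite E eqxx in vu.
  case: (eqVneq v u) => [E|vu].
    subst v.
    apply: (concl1 Hn Uin (bc_Pair_P' Ls av)).
    move=> q; rewrite trivE => /or3P [] /eqP -> qp //.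
      case/bPair_inv => [/eqP|[/eqP|[b2 [w2 [/eqP]]]]]; rewrite ?eqT //.
      by move=> /eqP E; rewrite E eqxx in ax.
    case/bPair_inv => [/eqP|[/eqP|[b2 [w2 [/eqP]]]]]; rewrite ?eqT //.
    by case/andP => /eqP E1 /eqP E2; subst; case => _ _; rewrite eqxx.
  have fax : f a != f x by rewrite (inj_eq finj).
  case: (boolP (cP x v)) => xv; case: (boolP (cP a u)) => au.
  +
    apply: (concl1 Hn Min (PS HS' Hf ax vu av xv au Hxu)).
    move=> q; rewrite trivE => /or3P [] /eqP -> qp //.
      case/bPair_inv => [/eqP|[/eqP|[b2 [w2 [/eqP]]]]]; rewrite ?eqT //.
      by move=> /eqP E; rewrite E eqxx in ax.
    case/bPair_inv => [/eqP|[/eqP|[b2 [w2 [/eqP]]]]]; rewrite ?eqT //.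
    by move=> /eqP E; rewrite E eqxx in vu.
  +
    apply: (concl2 Hn Xin (bc_Pair_P' Ls av) (bcoll_sym (bc_P_P' Ls xv))).
    move=> q; rewrite trivE => /or3P [] /eqP -> qp //; last exact: farU_pair.
    split.
      case/bPair_inv => [/eqP|[/eqP|[b2 [w2 [/eqP]]]]]; rewrite ?eqT //.
      by case/andP => /eqP E1 /eqP E2; subst; case => _ _ _ _ H; rewrite /calP H in au.
    case=> b0 [/bPair_inv H1 H2]; case: H1 => [E|[E|[b [w [E [bw ab vw vb wa]]]]]]; subst b0.
    * case/bP_inv: H2 => w [_ [/eqP|/eqP]]; rewrite eqT // => /andP [/eqP E _].
      by rewrite E eqxx in ax.
    * case/bP'_inv: H2 => b [_ [/eqP|/eqP]]; rewrite eqT // => /andP [_ /eqP E].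
      by rewrite E eqxx in vu.
    * case/bPair_inv: H2 => [/eqP|[/eqP|[b2 [w2 [/eqP]]]]]; rewrite ?eqT //.
      case/andP => /eqP E1 /eqP E2; subst b2 w2; case => _ bx wu wx ub.
      have fbx : f b != f x by rewrite (inj_eq finj).
      have fab : f a != f b by rewrite (inj_eq finj).
      have := lemG HS' vw (a := f a) (b := f b) (x := f x) (u := u).
      rewrite !(perp_sym _ v) !(perp_sym _ w) => /(_ av wa vb bw xv wx fab fax fbx ub Hxu) H.
      by rewrite /calP H in au.
  +
    apply: (concl2 Hn Uin (bcoll_sym (bc_P_Pair Ls av)) (bc_P_P' Ls au)).
    move=> q; rewrite trivE => /or3P [] /eqP -> qp //; first exact: farX_pair.
    split.
      case/bPair_inv => [/eqP|[/eqP|[b2 [w2 [/eqP]]]]]; rewrite ?eqT //.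
      by case/andP => /eqP E1 /eqP E2; subst; case => _ _ _ H _; rewrite /calP H in xv.
    case=> b0 [/bPair_inv H1 H2]; case: H1 => [E|[E|[b [w [E [bw ab vw vb wa]]]]]]; subst b0.
    * case/bP_inv: H2 => w [_ [/eqP|/eqP]]; rewrite eqT // => /andP [/eqP E _].
      by rewrite E eqxx in ax.
    * case/bP'_inv: H2 => b [_ [/eqP|/eqP]]; rewrite eqT // => /andP [_ /eqP E].
      by rewrite E eqxx in vu.
    * case/bPair_inv: H2 => [/eqP|[/eqP|[b2 [w2 [/eqP]]]]]; rewrite ?eqT //.
      case/andP => /eqP E1 /eqP E2; subst b2 w2; case => _ bx wu wx ub.
      have fbx : f b != f x by rewrite (inj_eq finj).
      have fab : f a != f b by rewrite (inj_eq finj).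
      have uw : u != w by rewrite eq_sym.
      have fxb : f x != f b by rewrite eq_sym.
      have fxa : f x != f a by rewrite eq_sym.
      have fba : f b != f a by rewrite eq_sym.
      have := lemG HS' uw (a := f x) (b := f b) (x := f a) (u := v).
      rewrite !(perp_sym _ u) !(perp_sym _ w) => /(_ Hxu wx ub bw au wa fxb fxa fba vb av) H.
      by rewrite /calP H in xv.
  +
    have [l [lL xl ul]] : exists l, [/\ l \in Ls', f x \in l & u \in l].
      case: (eqVneq u (f x)) => [->|uxn].
        by case: (lines_ex HS' (f x)) => l lL xl; exists l.
      by apply: line_thr; apply: perp_coll Hxu uxn.
    case: (proj_perp HS' (f a) lL) => w wl wa.
    case: (proj_perp HS' v lL) => b' bl bv.
    have fb : f (g b') = b' by rewrite gf.
    have ub : u \in perp' (f (g b')) by rewrite fb (line_perp lL bl ul).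
    have wx : w \in perp' (f x) := line_perp lL xl wl.
    have wb : w \in perp' (f (g b')) by rewrite fb (line_perp lL bl wl).
    have vb : v \in perp' (f (g b')) by rewrite fb perp_sym.
    have ab : a != g b'.
      by apply/eqP => E; move: ub; rewrite -E; apply/negP; rewrite -/(calP Ls' f a u).
    have vw : v != w by apply/eqP => E; move: xv; rewrite /calP E wx.
    have bx : g b' != x by apply/eqP => E; move: xv; rewrite /calP -E vb.
    have wu : w != u by apply/eqP => E; move: au; rewrite /calP -E wa.
    apply: (concl2 Hn Min (PS HS' Hf ab vw av vb wa wb) (PS HS' Hf bx wu wb wx ub Hxu)).
    move=> q; rewrite trivE => /or3P [] /eqP -> qp //; [exact: farX_pair|exact: farU_pair].
Qed.

End Main.

Theorem proposition4p6 (P P' : finType) (Ls : {set {set P}}) (Ls' : {set {set P'}})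
  (f : P -> P') (HS : is_gq22 Ls) (HS' : is_gq22 Ls') (Hf : is_iso Ls Ls' f)
  (x : P) (u : P') (Hxu : calP Ls' f x u) (alpha : bigT P P') :
  isPt Ls' f alpha -> alpha \notin triv_line x u ->
  exists! p : bigT P P', p \in triv_line x u /\
    forall q, q \in triv_line x u -> dist_leq Ls Ls' f alpha p q.
Proof. exact: (main HS' Hf Hxu). Qed.
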